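(* Let $a\ge1$ be an integer and $R>0$. For $\zeta\in D^a_R$ the function $\mathcal{R}^a(\zeta)(t)=\zeta(t)t^a+a\int_t^\infty\zeta(s)s^{a-1}ds$, $t>0$, extends continuously to $[0,\infty)$, and the resulting map $\mathcal{R}^a:D^a_R\to C_{c,R}([0,\infty))$ is a topological isomorphism (a continuous linear bijection with continuous inverse).
   Context: $C_b((0,\infty))$: continuous functions on $(0,\infty)$ with support bounded above. $D^a_R$: the set of $\zeta\in C_b((0,\infty))$ with support in $(0,R]$, $\lim_{t\to0}t^a\zeta(t)=0$, and $\lim_{t\to0}\int_t^\infty\zeta(r)r^{a-1}dr$ existing and finite, with norm $\|\zeta\|_{D^a}=\sup_{t>0}t^a|\zeta(t)|+\sup_{t>0}|\int_t^\infty\zeta(r)r^{a-1}dr|$. $C_{c,R}([0,\infty))$: continuous functions on $[0,\infty)$ supported in $[0,R]$, with the maximum norm. *)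

(* Defs.v *)
From Stdlib Require Import Reals Lra.
From Coquelicot Require Import Coquelicot.
Open Scope R_scope.

(* Functions on (0,oo) (resp. [0,oo)) are represented as functions R -> R,
   normalised to vanish off the domain, so that equality of elements is
   equality of functions. *)

(* For zeta supported in (0,Rb]:  \int_t^oo zeta(r) r^(a-1) dr = \int_t^Rb ... *)
Definition Dint (a : nat) (Rb : R) (z : R -> R) (t : R) : R :=
  RInt (fun r => z r * r ^ (a - 1)) t Rb.

Definition inD (a : nat) (Rb : R) (z : R -> R) : Prop :=
  (forall t, 0 < t -> continuous z t) /\
  (forall t, t <= 0 -> z t = 0) /\
  (forall t, Rb < t -> z t = 0) /\
  filterlim (fun t => t ^ a * z t) (at_right 0) (locally 0) /\
  (exists L : R, filterlim (Dint a Rb z) (at_right 0) (locally L)).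

Definition normD (a : nat) (Rb : R) (z : R -> R) : R :=
  real (Lub_Rbar (fun x => exists t, 0 < t /\ x = t ^ a * Rabs (z t))) +
  real (Lub_Rbar (fun x => exists t, 0 < t /\ x = Rabs (Dint a Rb z t))).

Definition inC (Rb : R) (f : R -> R) : Prop :=
  (forall t, 0 < t -> continuous f t) /\
  filterlim f (at_right 0) (locally (f 0)) /\
  (forall t, Rb < t -> f t = 0) /\
  (forall t, t < 0 -> f t = 0).

Definition normC (f : R -> R) : R :=
  real (Lub_Rbar (fun x => exists t, 0 <= t /\ x = Rabs (f t))).

Definition Rpos (a : nat) (Rb : R) (z : R -> R) (t : R) : R :=
  z t * t ^ a + INR a * Dint a Rb z t.

(* The extension to [0,oo): value at 0 is the limit of Rpos along 1/(n+1)
   (the theorem asserts that the extension is continuous at 0 via inC). *)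
Definition Rmap (a : nat) (Rb : R) (z : R -> R) (t : R) : R :=
  if Rlt_dec 0 t then Rpos a Rb z t
  else if Req_EM_T t 0 then real (Lim_seq (fun n => Rpos a Rb z (/ INR (S n))))
  else 0.

(* Main.v *)
Require Import Defs.
From Stdlib Require Import Reals Lra Lia ZArith FunctionalExtensionality.
From Coquelicot Require Import Coquelicot.
Open Scope R_scope.


Definition lim0 (f : R -> R) (l : R) :=
  forall eps, 0 < eps -> exists d, 0 < d /\ forall t, 0 < t < d -> Rabs (f t - l) < eps.

Lemma ballR (x : R) (e : R) (y : R) : @ball R_UniformSpace x e y <-> Rabs (Rminus y x) < e.
Proof. unfold ball; simpl; unfold AbsRing_ball, abs, minus, plus, opp; simpl. tauto. Qed.

Lemma lim0_iff f l : filterlim f (at_right 0) (locally l) <-> lim0 f l.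
Proof.
  split.
  - intros H eps He. destruct (proj1 (filterlim_locally f l) H (mkposreal eps He)) as [d Hd].
    exists d; split; [apply cond_pos|]. intros t Ht. apply ballR. apply Hd.
    apply ballR. rewrite Rminus_0_r, Rabs_pos_eq; lra. lra.
  - intros H. apply filterlim_locally. intros [eps He]. destruct (H eps He) as [d [Hd Hd']].
    exists (mkposreal d Hd). intros y Hy Hy'. apply ballR. apply Hd'.
    assert (Hb := proj1 (ballR 0 d y) Hy). simpl in Hb. rewrite Rminus_0_r, Rabs_pos_eq in Hb; lra.
Qed.

Lemma lim0_seq f l : lim0 f l -> is_lim_seq (fun n => f (/ INR (S n))) l.
Proof.
  intros H. apply is_lim_seq_spec. intros [eps He]. destruct (H eps He) as [d [Hd Hd']].
  destruct (archimed (/ d)) as [Hu _].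
  assert (Hp : (0 <= up (/d))%Z). { apply le_IZR. assert (0 < /d) by (apply Rinv_0_lt_compat; lra). lra. }
  exists (Z.to_nat (up (/ d))). intros n Hn. apply Hd'.
  assert (HS : 0 < INR (S n)) by (apply lt_0_INR; lia).
  split. apply Rinv_0_lt_compat; lra.
  assert (INR (S n) > / d).
  { apply Rlt_le_trans with (IZR (up (/d))). lra. rewrite <- (Z2Nat.id (up (/ d))) by lia.
    rewrite <- INR_IZR_INZ. apply le_INR. lia. }
  rewrite <- (Rinv_inv d). apply Rinv_lt_contravar. apply Rmult_lt_0_compat; auto. apply Rinv_0_lt_compat; lra.
  lra.
Qed.

Lemma lim0_plus f g l1 l2 : lim0 f l1 -> lim0 g l2 -> lim0 (fun t => f t + g t) (l1 + l2).
Proof.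
  intros Hf Hg eps He. destruct (Hf (eps/2)) as [d1 [H1 H1']]; [lra|].
  destruct (Hg (eps/2)) as [d2 [H2 H2']]; [lra|].
  exists (Rmin d1 d2); split. apply Rmin_glb_lt; lra.
  intros t Ht. assert (t < d1) by (eapply Rlt_le_trans; [apply Ht| apply Rmin_l]).
  assert (t < d2) by (eapply Rlt_le_trans; [apply Ht| apply Rmin_r]).
  specialize (H1' t ltac:(lra)); specialize (H2' t ltac:(lra)).
  replace (f t + g t - (l1 + l2)) with ((f t - l1) + (g t - l2)) by ring.
  eapply Rle_lt_trans. apply Rabs_triang. lra.
Qed.

Lemma lim0_scal c f l : lim0 f l -> lim0 (fun t => c * f t) (c * l).
Proof.
  intros Hf eps He. destruct (Hf (eps / (Rabs c + 1))) as [d [H1 H1']].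
  apply Rdiv_lt_0_compat; [lra| pose proof (Rabs_pos c); lra].
  exists d; split; auto. intros t Ht. specialize (H1' t Ht).
  replace (c * f t - c * l) with (c * (f t - l)) by ring. rewrite Rabs_mult.
  pose proof (Rabs_pos c). pose proof (Rabs_pos (f t - l)).
  apply Rle_lt_trans with ((Rabs c + 1) * Rabs (f t - l)). nra.
  apply Rmult_lt_reg_r with (/ (Rabs c + 1)). apply Rinv_0_lt_compat; lra.
  replace ((Rabs c + 1) * Rabs (f t - l) * / (Rabs c + 1)) with (Rabs (f t - l)) by (field; lra).
  exact H1'.
Qed.

Lemma lim0_ext f g l : (forall t, 0 < t -> f t = g t) -> lim0 f l -> lim0 g l.
Proof. intros E H eps He. destruct (H eps He) as [d [Hd H']]. exists d; split; auto.
  intros t Ht. rewrite <- E by lra. auto. Qed.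

Lemma lim0_unique f l1 l2 : lim0 f l1 -> lim0 f l2 -> l1 = l2.
Proof.
  intros H1 H2. apply Rminus_diag_uniq. apply Rabs_eq_0. apply Rle_antisym; [|apply Rabs_pos].
  apply le_epsilon. intros eps He. destruct (H1 (eps/2)) as [d1 [Hd1 H1']]; [lra|].
  destruct (H2 (eps/2)) as [d2 [Hd2 H2']]; [lra|].
  set (t := Rmin d1 d2 / 2). assert (0 < Rmin d1 d2) by (apply Rmin_glb_lt; lra).
  pose proof (Rmin_l d1 d2). pose proof (Rmin_r d1 d2).
  specialize (H1' t ltac:(unfold t; lra)). specialize (H2' t ltac:(unfold t; lra)).
  replace (l1 - l2) with ((f t - l2) - (f t - l1)) by ring.
  eapply Rle_trans. apply Rabs_triang. rewrite Rabs_Ropp. lra.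
Qed.

Ltac bR H := apply (proj1 (ballR _ _ _)) in H; cbn [pos] in H; apply Rabs_lt_between in H.

Lemma lub_le (E : R -> Prop) M : (forall x, E x -> x <= M) -> (exists x, E x) ->
  (forall x, E x -> x <= real (Lub_Rbar E)) /\ real (Lub_Rbar E) <= M.
Proof.
  intros HM [x0 Hx0]. destruct (Lub_Rbar_correct E) as [Hub Hl].
  assert (HMl : Rbar_le (Lub_Rbar E) M) by (apply Hl; intros x Hx; simpl; auto).
  assert (H0 : Rbar_le x0 (Lub_Rbar E)) by (apply Hub; auto).
  destruct (Lub_Rbar E) as [l| |]; simpl in *; try contradiction.
  split; auto.
Qed.

Definition cpos (g : R -> R) := forall s, 0 < s -> continuous g s.

Lemma Rmin_pos' x y : 0 < x -> 0 < y -> 0 < Rmin x y.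
Proof. intros; apply Rmin_glb_lt; auto. Qed.

Lemma exR g t u : cpos g -> 0 < t -> 0 < u -> ex_RInt g t u.
Proof. intros Hg Ht Hu. apply (ex_RInt_continuous (V:=R_CompleteNormedModule)). intros z Hz. apply Hg.
  pose proof (Rmin_pos' t u Ht Hu); lra. Qed.

Lemma derR g u x : cpos g -> 0 < u -> 0 < x -> is_derive (fun t => RInt g t u) x (- g x).
Proof.
  intros Hg Hu Hx. apply (is_derive_RInt' (V:=R_NormedModule) g (fun t => RInt g t u) x u); [|apply Hg; auto].
  exists (mkposreal (x/2) ltac:(lra)). intros y Hy. apply (RInt_correct (V:=R_CompleteNormedModule)). apply exR; auto.
  bR Hy. lra.
Qed.

Lemma cont_pow n x : continuous (fun s => s ^ n) x.
Proof. apply (ex_derive_continuous (K:=R_AbsRing) (V:=R_NormedModule)). auto_derive. auto. Qed.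

Lemma cont_invpow n x : 0 < x -> continuous (fun s => / s ^ n) x.
Proof. intros Hx. apply (ex_derive_continuous (K:=R_AbsRing) (V:=R_NormedModule)). auto_derive. apply pow_nonzero. lra. Qed.

Lemma cpos_mult f g : cpos f -> cpos g -> cpos (fun s => f s * g s).
Proof. intros Hf Hg s Hs. apply (continuous_mult f g); auto. Qed.

Lemma cpos_plus f g : cpos f -> cpos g -> cpos (fun s => f s + g s).
Proof. intros Hf Hg s Hs. apply (continuous_plus f g); auto. Qed.

Lemma cpos_const c : cpos (fun _ => c).
Proof. intros s _. apply continuous_const. Qed.

Lemma cpos_pow n : cpos (fun s => s ^ n).
Proof. intros s _. apply cont_pow. Qed.

Lemma cpos_invpow n : cpos (fun s => / s ^ n).
Proof. intros s Hs. apply cont_invpow; auto. Qed.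

Lemma cpos_abs f : cpos f -> cpos (fun s => Rabs (f s)).
Proof. intros Hf s Hs. apply continuous_Rabs_comp. auto. Qed.

Lemma cpos_ext f g : (forall s, 0 < s -> f s = g s) -> cpos f -> cpos g.
Proof.
  intros E Hf s Hs. apply (continuous_ext_loc g f). exists (mkposreal (s/2) ltac:(lra)).
  intros y Hy. bR Hy. apply E. lra.
  auto.
Qed.

Lemma cpos_der f : (forall s, 0 < s -> ex_derive f s) -> cpos f.
Proof. intros H s Hs. apply (ex_derive_continuous (K:=R_AbsRing) (V:=R_NormedModule)). auto. Qed.

Lemma bounded_pos g l Rb : cpos g -> lim0 g l -> 0 < Rb ->
  exists M, forall t, 0 < t <= Rb -> Rabs (g t) <= M.
Proof.
  intros Hg Hl HR.
  set (h := fun t => if Rlt_dec 0 t then g t else l).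
  destruct (continuity_ab_maj (fun t => Rabs (h t)) 0 Rb) as [Mx [HM _]]. lra.
  - intros c Hc. apply continuity_pt_filterlim. apply (continuous_Rabs_comp h).
    destruct (Rlt_dec 0 c) as [Hc0|Hc0].
    + apply (continuous_ext_loc h g). exists (mkposreal (c/2) ltac:(lra)).
      intros y Hy. bR Hy. unfold h.
      destruct (Rlt_dec 0 y); auto. lra. apply Hg; auto.
    + assert (c = 0) by lra. subst c. intros P [e HP]. simpl in HP.
      unfold h at 1 in HP. destruct (Rlt_dec 0 0); [lra|].
      destruct (Hl e (cond_pos e)) as [d [Hd Hd']]. exists (mkposreal d Hd). intros y Hy.
      apply HP. apply (proj2 (ballR _ _ _)). bR Hy. unfold h.
      destruct (Rlt_dec 0 y). apply Hd'. lra.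
      rewrite Rminus_diag, Rabs_R0. apply cond_pos.
  - exists (Rabs (h Mx)). intros t Ht. specialize (HM t ltac:(lra)). unfold h at 1 in HM.
    destruct (Rlt_dec 0 t); [auto|lra].
Qed.

Lemma pow_le1 t n : 0 <= t <= 1 -> t ^ n <= 1.
Proof. intros H; induction n; simpl; [lra|]. pose proof (pow_le t n (proj1 H)). nra. Qed.

Lemma pow_pos' t n : 0 < t -> 0 < t ^ n.
Proof. intros; apply pow_lt; auto. Qed.

Lemma is_derive_eq (f : R -> R) x l l' : is_derive f x l -> l = l' -> is_derive f x l'.
Proof. intros H ->; auto. Qed.

Lemma Dint_eq k Rb w t : Dint (S k) Rb w t = RInt (fun r => w r * r ^ k) t Rb.
Proof. unfold Dint. replace (S k - 1)%nat with k by lia. reflexivity. Qed.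

Lemma Dint_der k Rb w x : 0 < Rb -> cpos w -> 0 < x ->
  is_derive (Dint (S k) Rb w) x (- (w x * x ^ k)).
Proof.
  intros HR Hw Hx. apply (is_derive_ext (fun t => RInt (fun r => w r * r ^ k) t Rb)).
  intros; rewrite Dint_eq; auto.
  apply (derR (fun r => w r * r ^ k)); auto. apply cpos_mult; auto. apply cpos_pow.
Qed.

Lemma RInt_zero_on (g : R -> R) t u : (forall x, Rmin t u < x < Rmax t u -> g x = 0) -> RInt g t u = 0.
Proof.
  intros H. rewrite (RInt_ext g (fun _ => 0)) by auto. rewrite RInt_const.
  unfold scal; simpl; unfold mult; simpl; ring.
Qed.

Lemma Dint_zero k Rb w t : (forall t, Rb < t -> w t = 0) -> Rb < t -> Dint (S k) Rb w t = 0.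
Proof.
  intros Hw Ht. rewrite Dint_eq. apply RInt_zero_on. intros x Hx.
  rewrite Rmin_right, Rmax_left in Hx by lra. rewrite Hw by lra. ring.
Qed.

Lemma Dint_Rb k Rb w : Dint (S k) Rb w Rb = 0.
Proof. rewrite Dint_eq. apply (RInt_point (V:=R_CompleteNormedModule)). Qed.

Lemma kernel k t u : 0 < t -> 0 < u ->
  is_RInt (fun s => / s ^ (S (S k))) t u ((/ t ^ (S k) - / u ^ (S k)) / INR (S k)).
Proof.
  intros Ht Hu.
  assert (HS : 0 < INR (S k)) by (apply lt_0_INR; lia).
  remember (INR (S k)) as A.
  replace ((/ t ^ (S k) - / u ^ (S k)) / A) with
    (minus ((fun s => - / s ^ (S k) / A) u) ((fun s => - / s ^ (S k) / A) t)).
  2:{ unfold minus, plus, opp; simpl. field. repeat split; try apply pow_nonzero; lra. }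
  apply (is_RInt_derive (V:=R_CompleteNormedModule) (fun s => - / s ^ (S k) / A)).
  - intros x Hx. assert (0 < x) by (pose proof (Rmin_pos' t u Ht Hu); lra).
    auto_derive. apply Rgt_not_eq; apply Rmult_lt_0_compat; [lra|apply pow_pos'; lra].
    change (match k with 0%nat => 1 | S _ => INR k + 1 end) with (INR (S k)). rewrite <- HeqA.
    simpl. field. repeat split; try apply pow_nonzero; lra.
  - intros x Hx. assert (0 < x) by (pose proof (Rmin_pos' t u Ht Hu); lra). apply cont_invpow; auto.
Qed.

Lemma I_bound2 k Rb g c1 c2 t : 0 < Rb -> cpos g -> 0 <= c1 -> 0 <= c2 ->
  (forall s, t < s < Rb -> Rabs (g s) <= c1 + c2 * s ^ (S (S k))) -> 0 < t <= Rb ->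
  Rabs (t ^ (S k) * RInt (fun s => g s * / s ^ (S (S k))) t Rb) <= c1 / INR (S k) + c2 * t ^ (S k) * Rb.
Proof.
  intros HR Hg Hc1 Hc2 Hb Ht.
  assert (HS : 0 < INR (S k)) by (apply lt_0_INR; lia).
  remember (INR (S k)) as A.
  assert (HV : is_RInt (fun s => c1 * / s ^ (S (S k)) + c2) t Rb
     (c1 * ((/ t ^ (S k) - / Rb ^ (S k)) / A) + (Rb - t) * c2)).
  { apply (is_RInt_plus (V:=R_NormedModule) (fun s => c1 * / s ^ (S (S k))) (fun _ => c2)).
    apply (is_RInt_scal (V:=R_NormedModule) (fun s => / s ^ (S (S k)))). subst A. apply kernel; lra.
    apply (is_RInt_const (V:=R_NormedModule)). }
  assert (Hex : ex_RInt (fun s => g s * / s ^ (S (S k))) t Rb).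
  { apply exR; try lra. apply cpos_mult; auto. apply cpos_invpow. }
  assert (H1 := abs_RInt_le _ t Rb (proj2 Ht) Hex).
  assert (H2 : RInt (fun s => Rabs (g s * / s ^ (S (S k)))) t Rb <= RInt (fun s => c1 * / s ^ (S (S k)) + c2) t Rb).
  { apply RInt_le. lra. apply exR; try lra. apply cpos_abs. apply cpos_mult; auto. apply cpos_invpow.
    exists (c1 * ((/ t ^ (S k) - / Rb ^ (S k)) / A) + (Rb - t) * c2). exact HV.
    intros x Hx. assert (Hxp : 0 < x ^ (S (S k))) by (apply pow_pos'; lra).
    rewrite Rabs_mult, (Rabs_pos_eq (/ _)) by (left; apply Rinv_0_lt_compat; auto).
    specialize (Hb x Hx). apply Rmult_le_reg_r with (x ^ (S (S k))); auto.
    rewrite Rmult_assoc, Rinv_l by lra. rewrite Rmult_plus_distr_r, Rmult_assoc, Rinv_l by lra. lra. }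
  rewrite (is_RInt_unique _ _ _ _ HV) in H2.
  assert (Htp : 0 < t ^ (S k)) by (apply pow_pos'; lra).
  assert (HRp : 0 < Rb ^ (S k)) by (apply pow_pos'; lra).
  rewrite Rabs_mult, Rabs_pos_eq by lra.
  apply Rle_trans with (t ^ (S k) * (c1 * ((/ t ^ (S k) - / Rb ^ (S k)) / A) + (Rb - t) * c2)).
  apply Rmult_le_compat_l; lra.
  replace (t ^ (S k) * (c1 * ((/ t ^ (S k) - / Rb ^ (S k)) / A) + (Rb - t) * c2)) with
    (c1 / A - c1 / A * (t ^ (S k) / Rb ^ (S k)) + c2 * t ^ (S k) * Rb - c2 * t ^ (S k) * t) by (field; lra).
  assert (0 <= c1 / A * (t ^ (S k) / Rb ^ (S k))).
  { apply Rmult_le_pos; apply Rmult_le_pos; try lra; left; apply Rinv_0_lt_compat; auto. }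
  assert (0 <= c2 * t ^ (S k) * t) by (apply Rmult_le_pos; [apply Rmult_le_pos|]; lra).
  lra.
Qed.

Lemma der_invpow k x : 0 < x -> is_derive (fun s => / s ^ (S k)) x (- INR (S k) * / x ^ (S (S k))).
Proof.
  intros Hx. assert (HS : 0 < INR (S k)) by (apply lt_0_INR; lia).
  remember (INR (S k)) as A.
  auto_derive. apply Rgt_not_eq; apply Rmult_lt_0_compat; [lra|apply pow_pos'; lra].
  change (match k with 0%nat => 1 | S _ => INR k + 1 end) with (INR (S k)). rewrite <- HeqA.
  simpl. field. repeat split; try apply pow_nonzero; lra.
Qed.

Lemma cpos_Dint k Rb w : 0 < Rb -> cpos w -> cpos (Dint (S k) Rb w).
Proof. intros HR Hw. apply cpos_der. intros s Hs. eexists. apply Dint_der; auto. Qed.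

Lemma cpos_Rpos k Rb w : 0 < Rb -> cpos w -> cpos (Rpos (S k) Rb w).
Proof.
  intros HR Hw. unfold Rpos. apply cpos_plus. apply cpos_mult; auto. apply cpos_pow.
  apply cpos_mult. apply cpos_const. apply cpos_Dint; auto.
Qed.

Lemma inversion k Rb w t : 0 < Rb -> cpos w -> 0 < t ->
  Dint (S k) Rb w t = t ^ (S k) * RInt (fun s => Rpos (S k) Rb w s * / s ^ (S (S k))) t Rb.
Proof.
  intros HR Hw Ht.
  set (F := fun s => - (Dint (S k) Rb w s * / s ^ (S k))).
  assert (HI : is_RInt (fun s => Rpos (S k) Rb w s * / s ^ (S (S k))) t Rb (minus (F Rb) (F t))).
  { apply (is_RInt_derive (V:=R_CompleteNormedModule) F).
    - intros x Hx. assert (0 < x) by (pose proof (Rmin_pos' t Rb Ht HR); lra).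
      unfold F. eapply is_derive_eq.
      apply (is_derive_opp (K:=R_AbsRing) (V:=R_NormedModule) (fun s => Dint (S k) Rb w s * / s ^ (S k))).
      apply (is_derive_mult (K:=R_AbsRing)). apply Dint_der; auto. apply der_invpow; auto.
      intros; apply Rmult_comm.
      unfold Rpos, opp, plus, mult; simpl. field. repeat split; try apply pow_nonzero; lra.
    - intros x Hx. assert (0 < x) by (pose proof (Rmin_pos' t Rb Ht HR); lra).
      apply cpos_mult. apply cpos_Rpos; auto. apply cpos_invpow. auto. }
  rewrite (is_RInt_unique _ _ _ _ HI). unfold F, minus, plus, opp; simpl. rewrite Dint_Rb.
  field. repeat split; try apply pow_nonzero; lra.
Qed.

Lemma inD_cpos a Rb z : inD a Rb z -> cpos z.
Proof. intros [H _]; exact H. Qed.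

Lemma Rmap_pos a Rb z t : 0 < t -> Rmap a Rb z t = Rpos a Rb z t.
Proof. intros Ht. unfold Rmap. destruct (Rlt_dec 0 t); [auto|lra]. Qed.

Lemma Rmap_neg a Rb z t : t < 0 -> Rmap a Rb z t = 0.
Proof. intros Ht. unfold Rmap. destruct (Rlt_dec 0 t); [lra|]. destruct (Req_EM_T t 0); [lra|auto]. Qed.

Lemma Rmap_0 a Rb z L : lim0 (Rpos a Rb z) L -> Rmap a Rb z 0 = L.
Proof.
  intros H. unfold Rmap. destruct (Rlt_dec 0 0); [lra|]. destruct (Req_EM_T 0 0); [|lra].
  rewrite (is_lim_seq_unique _ _ (lim0_seq _ _ H)). reflexivity.
Qed.

Lemma inD_lim k Rb w : 0 < Rb -> inD (S k) Rb w -> lim0 (Rpos (S k) Rb w) (Rmap (S k) Rb w 0).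
Proof.
  intros HR [Hw [H0 [H1 [H2 [L H3]]]]].
  apply lim0_iff in H2. apply lim0_iff in H3.
  assert (Hl : lim0 (Rpos (S k) Rb w) (0 + INR (S k) * L)).
  { apply (lim0_ext (fun t => t ^ (S k) * w t + INR (S k) * Dint (S k) Rb w t)).
    intros; unfold Rpos; ring. apply lim0_plus; auto. apply lim0_scal; auto. }
  rewrite (Rmap_0 _ _ _ _ Hl). auto.
Qed.

Lemma Dint_lin k Rb z1 z2 c t : 0 < Rb -> cpos z1 -> cpos z2 -> 0 < t ->
  Dint (S k) Rb (fun s => z1 s + c * z2 s) t = Dint (S k) Rb z1 t + c * Dint (S k) Rb z2 t.
Proof.
  intros HR H1 H2 Ht. rewrite !Dint_eq.
  apply is_RInt_unique.
  apply (is_RInt_ext (fun r => plus (z1 r * r ^ k) (scal c (z2 r * r ^ k)))).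
  intros; unfold plus, scal; simpl; unfold mult; simpl; ring.
  apply (is_RInt_plus (V:=R_NormedModule)).
  apply (RInt_correct (V:=R_CompleteNormedModule)). apply exR; auto. apply cpos_mult; auto. apply cpos_pow.
  apply (is_RInt_scal (V:=R_NormedModule)).
  apply (RInt_correct (V:=R_CompleteNormedModule)). apply exR; auto. apply cpos_mult; auto. apply cpos_pow.
Qed.

Lemma inD_lin k Rb z1 z2 c : 0 < Rb -> inD (S k) Rb z1 -> inD (S k) Rb z2 ->
  inD (S k) Rb (fun s => z1 s + c * z2 s).
Proof.
  intros HR [Hw1 [H01 [H11 [H21 [L1 H31]]]]] [Hw2 [H02 [H12 [H22 [L2 H32]]]]].
  assert (Hc : cpos (fun s => z1 s + c * z2 s)).
  { apply cpos_plus; auto. apply cpos_mult; auto. apply cpos_const. }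
  split; [auto|]. split. intros t Ht; rewrite H01, H02 by auto; ring.
  split. intros t Ht; rewrite H11, H12 by auto; ring.
  apply lim0_iff in H21, H22, H31, H32.
  split. apply lim0_iff.
  replace 0 with (0 + c * 0) by ring.
  apply (lim0_ext (fun t => t ^ (S k) * z1 t + c * (t ^ (S k) * z2 t))). intros; ring.
  apply lim0_plus; auto. apply lim0_scal; auto.
  exists (L1 + c * L2). apply lim0_iff.
  apply (lim0_ext (fun t => Dint (S k) Rb z1 t + c * Dint (S k) Rb z2 t)).
  intros; rewrite Dint_lin; auto.
  apply lim0_plus; auto. apply lim0_scal; auto.
Qed.

Lemma Rpos_lin k Rb z1 z2 c t : 0 < Rb -> cpos z1 -> cpos z2 -> 0 < t ->
  Rpos (S k) Rb (fun s => z1 s + c * z2 s) t = Rpos (S k) Rb z1 t + c * Rpos (S k) Rb z2 t.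
Proof. intros. unfold Rpos. rewrite Dint_lin; auto. ring. Qed.

Lemma Rmap_lin k Rb z1 z2 c : 0 < Rb -> inD (S k) Rb z1 -> inD (S k) Rb z2 ->
  Rmap (S k) Rb (fun s => z1 s + c * z2 s) = (fun t => Rmap (S k) Rb z1 t + c * Rmap (S k) Rb z2 t).
Proof.
  intros HR D1 D2. apply functional_extensionality. intros t.
  destruct (Rtotal_order t 0) as [Hn|[He|Hp]].
  - rewrite !Rmap_neg by auto. ring.
  - subst t. pose proof (inD_lim _ _ _ HR (inD_lin _ _ _ _ c HR D1 D2)) as H.
    apply (lim0_unique _ _ _ H).
    apply (lim0_ext (fun t => Rpos (S k) Rb z1 t + c * Rpos (S k) Rb z2 t)).
    intros; rewrite Rpos_lin; auto; [apply (inD_cpos _ _ _ D1)|apply (inD_cpos _ _ _ D2)].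
    apply lim0_plus. apply inD_lim; auto. apply lim0_scal. apply inD_lim; auto.
  - rewrite !Rmap_pos by auto. apply Rpos_lin; auto. apply (inD_cpos _ _ _ D1). apply (inD_cpos _ _ _ D2).
Qed.

Lemma Rmap_inC k Rb z : 0 < Rb -> inD (S k) Rb z -> inC Rb (Rmap (S k) Rb z).
Proof.
  intros HR D. pose proof (inD_lim _ _ _ HR D) as Hl.
  destruct D as [Hw [H0 [H1 _]]].
  split. apply (cpos_ext (Rpos (S k) Rb z)). intros; rewrite Rmap_pos; auto. apply cpos_Rpos; auto.
  split. apply lim0_iff. apply (lim0_ext (Rpos (S k) Rb z)). intros; rewrite Rmap_pos; auto. auto.
  split. intros t Ht. rewrite Rmap_pos by lra. unfold Rpos. rewrite H1, Dint_zero by auto. ring.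
  intros t Ht. apply Rmap_neg; auto.
Qed.

Lemma Rmap_inj k Rb z1 z2 : 0 < Rb -> inD (S k) Rb z1 -> inD (S k) Rb z2 ->
  Rmap (S k) Rb z1 = Rmap (S k) Rb z2 -> z1 = z2.
Proof.
  intros HR D1 D2 E. apply functional_extensionality. intros t.
  destruct (Rle_lt_dec t 0) as [Hn|Hp].
  - rewrite (proj1 (proj2 D1)), (proj1 (proj2 D2)); auto.
  - assert (EP : forall s, 0 < s -> Rpos (S k) Rb z1 s = Rpos (S k) Rb z2 s).
    { intros s Hs. rewrite <- !(Rmap_pos (S k) Rb _ s Hs). rewrite E. auto. }
    assert (ED : Dint (S k) Rb z1 t = Dint (S k) Rb z2 t).
    { rewrite !inversion; auto; try apply (inD_cpos _ _ _ D1); try apply (inD_cpos _ _ _ D2). f_equal. apply RInt_ext.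
      intros x Hx. rewrite EP; auto. pose proof (Rmin_pos' t Rb Hp HR). lra. }
    assert (Htp : 0 < t ^ (S k)) by (apply pow_pos'; auto).
    specialize (EP t Hp). unfold Rpos in EP. rewrite ED in EP.
    apply Rmult_eq_reg_r with (t ^ (S k)). lra. lra.
Qed.

Lemma lim0_bound f L B : lim0 f L -> (forall t, 0 < t -> Rabs (f t) <= B) -> Rabs L <= B.
Proof.
  intros Hl HB. destruct (Rle_lt_dec (Rabs L) B) as [H|H]; auto. exfalso.
  destruct (Hl (Rabs L - B)) as [d [Hd Hd']]; [lra|].
  specialize (Hd' (d/2) ltac:(lra)). specialize (HB (d/2) ltac:(lra)).
  pose proof (Rabs_triang_inv L (f (d/2))). rewrite <- Rabs_Ropp in Hd'.
  replace (- (f (d / 2) - L)) with (L - f (d/2)) in Hd' by ring. lra.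
Qed.

Definition N1 a (w : R -> R) := real (Lub_Rbar (fun x => exists t, 0 < t /\ x = t ^ a * Rabs (w t))).
Definition N2 a Rb (w : R -> R) := real (Lub_Rbar (fun x => exists t, 0 < t /\ x = Rabs (Dint a Rb w t))).

Lemma normD_eq a Rb w : normD a Rb w = N1 a w + N2 a Rb w.
Proof. reflexivity. Qed.

Lemma N_bounds k Rb w : 0 < Rb -> inD (S k) Rb w ->
  (forall t, 0 < t -> t ^ (S k) * Rabs (w t) <= N1 (S k) w) /\
  (forall t, 0 < t -> Rabs (Dint (S k) Rb w t) <= N2 (S k) Rb w) /\
  0 <= N1 (S k) w /\ 0 <= N2 (S k) Rb w.
Proof.
  intros HR D. pose proof D as [Hw [H0 [H1 [H2 [L H3]]]]].
  apply lim0_iff in H2, H3.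
  destruct (bounded_pos (fun t => t ^ (S k) * w t) 0 Rb) as [M1 HM1]; auto.
  { apply cpos_mult; auto. apply cpos_pow. }
  destruct (bounded_pos (Dint (S k) Rb w) L Rb) as [M2 HM2]; auto.
  { apply cpos_Dint; auto. }
  assert (HM1p : 0 <= M1) by (eapply Rle_trans; [apply Rabs_pos|apply (HM1 Rb); lra]).
  assert (HM2p : 0 <= M2) by (eapply Rle_trans; [apply Rabs_pos|apply (HM2 Rb); lra]).
  destruct (lub_le (fun x => exists t, 0 < t /\ x = t ^ (S k) * Rabs (w t)) M1) as [A1 B1].
  { intros x [t [Ht ->]]. destruct (Rle_lt_dec t Rb).
    - specialize (HM1 t ltac:(lra)). rewrite Rabs_mult, Rabs_pos_eq in HM1; auto.
      left; apply pow_pos'; auto.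
    - rewrite H1, Rabs_R0 by auto. lra. }
  { exists (1 ^ (S k) * Rabs (w 1)). exists 1. split; auto; lra. }
  destruct (lub_le (fun x => exists t, 0 < t /\ x = Rabs (Dint (S k) Rb w t)) M2) as [A2 B2].
  { intros x [t [Ht ->]]. destruct (Rle_lt_dec t Rb).
    - apply HM2; lra.
    - rewrite Dint_zero, Rabs_R0 by auto. lra. }
  { exists (Rabs (Dint (S k) Rb w 1)). exists 1. split; auto; lra. }
  split. intros t Ht. apply A1. exists t; auto.
  split. intros t Ht. apply A2. exists t; auto.
  split.
  - eapply Rle_trans; [|apply A1; exists 1; split; [lra|reflexivity]].
    apply Rmult_le_pos. rewrite pow1; lra. apply Rabs_pos.
  - eapply Rle_trans; [|apply A2; exists 1; split; [lra|reflexivity]]. apply Rabs_pos.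
Qed.

Lemma normC_le f B : (forall t, 0 <= t -> Rabs (f t) <= B) -> normC f <= B.
Proof.
  intros H. unfold normC. apply (lub_le (fun x => exists t, 0 <= t /\ x = Rabs (f t)) B).
  intros x [t [Ht ->]]; auto. exists (Rabs (f 0)), 0; split; [lra|auto].
Qed.

Lemma normC_ge k Rb w : 0 < Rb -> inD (S k) Rb w ->
  forall t, 0 <= t -> Rabs (Rmap (S k) Rb w t) <= normC (Rmap (S k) Rb w).
Proof.
  intros HR D. pose proof (inD_lim _ _ _ HR D) as Hl.
  destruct (bounded_pos (Rpos (S k) Rb w) (Rmap (S k) Rb w 0) Rb) as [M HM]; auto.
  { apply cpos_Rpos; auto. apply (inD_cpos _ _ _ D). }
  assert (HMp : 0 <= M) by (eapply Rle_trans; [apply Rabs_pos|apply (HM Rb); lra]).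
  pose proof (Rabs_pos (Rmap (S k) Rb w 0)).
  destruct (lub_le (fun x => exists t, 0 <= t /\ x = Rabs (Rmap (S k) Rb w t)) (M + Rabs (Rmap (S k) Rb w 0))) as [A B].
  { intros x [t [Ht ->]]. destruct (Rtotal_order t 0) as [?|[->|?]]. lra. lra.
    destruct (Rle_lt_dec t Rb).
    - rewrite Rmap_pos by auto. specialize (HM t ltac:(lra)). lra.
    - destruct (Rmap_inC _ _ _ HR D) as [_ [_ [HC _]]]. rewrite HC, Rabs_R0 by auto. lra. }
  { exists (Rabs (Rmap (S k) Rb w 0)), 0; split; [lra|auto]. }
  intros t Ht. apply A. exists t; auto.
Qed.

Lemma Rmap_sub k Rb z z0 : 0 < Rb -> inD (S k) Rb z -> inD (S k) Rb z0 ->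
  (fun t => Rmap (S k) Rb z t - Rmap (S k) Rb z0 t) = Rmap (S k) Rb (fun s => z s - z0 s).
Proof.
  intros HR D D0.
  replace (fun s => z s - z0 s) with (fun s => z s + -1 * z0 s) by (apply functional_extensionality; intros; ring).
  rewrite Rmap_lin; auto. apply functional_extensionality; intros; ring.
Qed.

Lemma inD_sub k Rb z z0 : 0 < Rb -> inD (S k) Rb z -> inD (S k) Rb z0 -> inD (S k) Rb (fun s => z s - z0 s).
Proof.
  intros HR D D0.
  replace (fun s => z s - z0 s) with (fun s => z s + -1 * z0 s) by (apply functional_extensionality; intros; ring).
  apply inD_lin; auto.
Qed.

Lemma cont_fwd k Rb w : 0 < Rb -> inD (S k) Rb w ->
  normC (Rmap (S k) Rb w) <= (INR (S k) + 1) * normD (S k) Rb w.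
Proof.
  intros HR D. destruct (N_bounds _ _ _ HR D) as [B1 [B2 [P1 P2]]].
  rewrite normD_eq.
  assert (HS : 0 < INR (S k)) by (apply lt_0_INR; lia).
  assert (Hp : forall t, 0 < t -> Rabs (Rpos (S k) Rb w t) <= (INR (S k) + 1) * (N1 (S k) w + N2 (S k) Rb w)).
  { intros t Ht. unfold Rpos. eapply Rle_trans. apply Rabs_triang.
    rewrite !Rabs_mult, (Rabs_pos_eq (t ^ _)), (Rabs_pos_eq (INR _)) by (try left; try apply pow_pos'; lra).
    specialize (B1 t Ht). specialize (B2 t Ht).
    assert (INR (S k) * Rabs (Dint (S k) Rb w t) <= INR (S k) * N2 (S k) Rb w) by (apply Rmult_le_compat_l; lra).
    nra. }
  apply normC_le. intros t Ht. destruct (Rle_lt_dec t 0).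
  - assert (t = 0) by lra. subst t. apply (lim0_bound (Rpos (S k) Rb w)); auto. apply inD_lim; auto.
  - rewrite Rmap_pos; auto.
Qed.

Lemma cont_bwd k Rb w : 0 < Rb -> inD (S k) Rb w ->
  normD (S k) Rb w <= 3 * normC (Rmap (S k) Rb w).
Proof.
  intros HR D. set (M := normC (Rmap (S k) Rb w)).
  pose proof (normC_ge _ _ _ HR D) as HC.
  assert (HMp : 0 <= M) by (eapply Rle_trans; [apply Rabs_pos|apply (HC 0); lra]).
  assert (HS : 1 <= INR (S k)) by (rewrite S_INR; pose proof (pos_INR k); lra).
  assert (HDint : forall t, 0 < t -> Rabs (Dint (S k) Rb w t) <= M / INR (S k)).
  { intros t Ht. destruct (Rle_lt_dec t Rb).
    - rewrite inversion; auto; [|apply (inD_cpos _ _ _ D)].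
      replace (M / INR (S k)) with (M / INR (S k) + 0 * t ^ (S k) * Rb) by ring.
      apply I_bound2; auto; try lra. apply cpos_Rpos; auto; apply (inD_cpos _ _ _ D).
      intros s Hs. rewrite <- Rmap_pos by lra. rewrite Rmult_0_l, Rplus_0_r. apply HC; lra.
    - rewrite Dint_zero, Rabs_R0 by (auto; apply D). apply Rmult_le_pos; auto.
      left; apply Rinv_0_lt_compat; lra. }
  assert (HMa : M / INR (S k) <= M).
  { unfold Rdiv. rewrite <- (Rmult_1_r M) at 2. apply Rmult_le_compat_l; auto.
    rewrite <- Rinv_1. apply Rinv_le_contravar; lra. }
  rewrite normD_eq.
  assert (E2 : N2 (S k) Rb w <= M).
  { unfold N2. apply (lub_le (fun x => exists t, 0 < t /\ x = Rabs (Dint (S k) Rb w t)) M).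
    intros x [t [Ht ->]]. specialize (HDint t Ht). lra.
    exists (Rabs (Dint (S k) Rb w 1)), 1; split; [lra|auto]. }
  assert (E1 : N1 (S k) w <= 2 * M).
  { unfold N1. apply (lub_le (fun x => exists t, 0 < t /\ x = t ^ (S k) * Rabs (w t)) (2 * M)).
    intros x [t [Ht ->]]. 
    assert (Htp : 0 < t ^ (S k)) by (apply pow_pos'; auto).
    replace (t ^ (S k) * Rabs (w t)) with (Rabs (Rpos (S k) Rb w t - INR (S k) * Dint (S k) Rb w t)).
    2:{ unfold Rpos. replace (w t * t ^ S k + INR (S k) * Dint (S k) Rb w t - INR (S k) * Dint (S k) Rb w t)
        with (w t * t ^ S k) by ring. rewrite Rabs_mult, (Rabs_pos_eq (t ^ S k)) by lra. ring. }
    eapply Rle_trans. apply Rabs_triang. rewrite Rabs_Ropp, Rabs_mult, (Rabs_pos_eq (INR _)) by lra.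
    rewrite <- Rmap_pos by auto. specialize (HC t ltac:(lra)). specialize (HDint t Ht).
    assert (INR (S k) * Rabs (Dint (S k) Rb w t) <= M).
    { apply Rmult_le_reg_l with (/ INR (S k)). apply Rinv_0_lt_compat; lra.
      rewrite <- Rmult_assoc, Rinv_l, Rmult_1_l by lra. unfold Rdiv in HDint. lra. }
    change (normC (Rmap (S k) Rb w)) with M in HC. lra.
    exists (1 ^ (S k) * Rabs (w 1)), 1; split; [lra|auto]. }
  lra.
Qed.

Definition If k Rb (f : R -> R) t := RInt (fun s => f s * / s ^ (S (S k))) t Rb.

Lemma lim_tI k Rb f : 0 < Rb -> cpos f -> lim0 f (f 0) ->
  lim0 (fun t => t ^ (S k) * If k Rb f t) (f 0 / INR (S k)).
Proof.
  intros HR Hf Hl eps He.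
  assert (HS : 1 <= INR (S k)) by (rewrite S_INR; pose proof (pos_INR k); lra).
  set (A := INR (S k)) in *. set (f0 := f 0) in *.
  destruct (Hl (eps/3)) as [d1 [Hd1 Hd1']]; [lra|].
  destruct (bounded_pos (fun s => f s - f0) 0 Rb) as [B HB]; auto.
  { apply cpos_plus; auto. apply cpos_const. }
  { replace 0 with (f0 + - f0) by ring. apply lim0_plus; auto. intros e He'; exists 1; split; [lra|].
    intros; rewrite Rminus_diag, Rabs_R0; lra. }
  assert (HBp : 0 <= B) by (eapply Rle_trans; [apply Rabs_pos|apply (HB Rb); lra]).
  set (dl := Rmin d1 Rb).
  assert (Hdl : 0 < dl) by (apply Rmin_pos'; auto).
  assert (Hdlp : 0 < dl ^ (S (S k))) by (apply pow_pos'; auto).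
  set (c2 := B / dl ^ (S (S k))).
  assert (Hc2 : 0 <= c2) by (apply Rmult_le_pos; auto; left; apply Rinv_0_lt_compat; auto).
  assert (HRp : 0 < Rb ^ (S k)) by (apply pow_pos'; auto).
  set (C := c2 * Rb + Rabs f0 / (A * Rb ^ (S k))).
  assert (HC : 0 <= C).
  { apply Rplus_le_le_0_compat. apply Rmult_le_pos; lra. apply Rmult_le_pos. apply Rabs_pos.
    left; apply Rinv_0_lt_compat; apply Rmult_lt_0_compat; lra. }
  exists (Rmin (Rmin dl 1) (eps / (3 * (C + 1)))). split.
  { apply Rmin_pos'. apply Rmin_pos'; lra. apply Rdiv_lt_0_compat; lra. }
  intros t [Ht Htd].
  assert (Ht1 : t < dl) by (pose proof (Rmin_l (Rmin dl 1) (eps / (3 * (C + 1)))); pose proof (Rmin_l dl 1); lra).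
  assert (Ht2 : t < 1) by (pose proof (Rmin_l (Rmin dl 1) (eps / (3 * (C + 1)))); pose proof (Rmin_r dl 1); lra).
  assert (Ht3 : t < eps / (3 * (C + 1))) by (pose proof (Rmin_r (Rmin dl 1) (eps / (3 * (C + 1)))); lra).
  assert (Hdl1 : dl <= d1) by apply Rmin_l. assert (Hdl2 : dl <= Rb) by apply Rmin_r.
  assert (Htp : 0 < t ^ (S k)) by (apply pow_pos'; auto).
  set (J := RInt (fun s => (f s - f0) * / s ^ (S (S k))) t Rb).
  assert (HJ : is_RInt (fun s => (f s - f0) * / s ^ (S (S k))) t Rb J).
  { apply (RInt_correct (V:=R_CompleteNormedModule)). apply exR; try lra.
    apply cpos_mult. apply cpos_plus; auto. apply cpos_const. apply cpos_invpow. }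
  assert (HI : If k Rb f t = J + f0 * ((/ t ^ (S k) - / Rb ^ (S k)) / A)).
  { unfold If. apply is_RInt_unique.
    apply (is_RInt_ext (fun s => plus ((f s - f0) * / s ^ (S (S k))) (scal f0 (/ s ^ (S (S k)))))).
    intros; unfold plus, scal; simpl; unfold mult; simpl; ring.
    apply (is_RInt_plus (V:=R_NormedModule)); auto.
    apply (is_RInt_scal (V:=R_NormedModule)). unfold A. apply kernel; lra. }
  assert (HJb : Rabs (t ^ (S k) * J) <= (eps / 3) / A + c2 * t ^ (S k) * Rb).
  { apply I_bound2; try lra.
    apply cpos_plus; auto. apply cpos_const.
    intros s Hs. assert (Hsp : 0 <= c2 * s ^ (S (S k))) by (apply Rmult_le_pos; auto; apply pow_le; lra).
    destruct (Rlt_le_dec s dl).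
    - specialize (Hd1' s ltac:(lra)). fold f0 in Hd1'. lra.
    - specialize (HB s ltac:(lra)). simpl in HB.
      assert (dl ^ (S (S k)) <= s ^ (S (S k))) by (apply pow_incr; lra).
      assert (B <= c2 * s ^ (S (S k))).
      { unfold c2. apply Rle_trans with (B / dl ^ (S (S k)) * dl ^ (S (S k))).
        right; field; lra. apply Rmult_le_compat_l; auto. }
      lra. }
  rewrite HI.
  replace (t ^ (S k) * (J + f0 * ((/ t ^ (S k) - / Rb ^ (S k)) / A)) - f0 / A)
    with (t ^ (S k) * J - f0 * t ^ (S k) / (A * Rb ^ (S k))) by (field; lra).
  eapply Rle_lt_trans. apply Rabs_triang. rewrite Rabs_Ropp.
  assert (E2 : Rabs (f0 * t ^ (S k) / (A * Rb ^ (S k))) = t ^ (S k) * (Rabs f0 / (A * Rb ^ (S k)))).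
  { unfold Rdiv. rewrite !Rabs_mult, (Rabs_pos_eq (t ^ S k)), (Rabs_pos_eq (/ _)). ring.
    left; apply Rinv_0_lt_compat; apply Rmult_lt_0_compat; lra. lra. }
  rewrite E2.
  assert (Hta : t ^ (S k) <= t).
  { simpl. pose proof (pow_le1 t k ltac:(lra)). pose proof (pow_le t k ltac:(lra)). nra. }
  assert (HeA : eps / 3 / A <= eps / 3).
  { unfold Rdiv at 1. rewrite <- (Rmult_1_r (eps / 3)) at 2. apply Rmult_le_compat_l; [lra|].
    rewrite <- Rinv_1. apply Rinv_le_contravar; lra. }
  assert (HtC : t ^ (S k) * C <= t * C) by (apply Rmult_le_compat_r; lra).
  assert (HtC2 : t * C < eps / 3).
  { apply Rle_lt_trans with (t * (C + 1)). nra.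
    apply Rmult_lt_reg_r with (/ (C + 1)). apply Rinv_0_lt_compat; lra.
    rewrite Rmult_assoc, Rinv_r, Rmult_1_r by lra.
    replace (eps / 3 * / (C + 1)) with (eps / (3 * (C + 1))) by (field; lra). lra. }
  assert (t ^ (S k) * C = c2 * t ^ (S k) * Rb + t ^ (S k) * (Rabs f0 / (A * Rb ^ (S k)))) by (unfold C; ring). lra.
Qed.

Lemma der_pow k x : is_derive (fun s => s ^ (S k)) x (INR (S k) * x ^ k).
Proof.
  auto_derive. auto. change (match k with 0%nat => 1 | S _ => INR k + 1 end) with (INR (S k)). ring.
Qed.

Lemma lim0_eq f l l' : lim0 f l -> l = l' -> lim0 f l'.
Proof. intros H ->; auto. Qed.

Lemma surj k Rb f : 0 < Rb -> inC Rb f -> exists z, inD (S k) Rb z /\ Rmap (S k) Rb z = f.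
Proof.
  intros HR [Hf [Hf0 [HfR Hfn]]]. apply lim0_iff in Hf0.
  assert (HS : 1 <= INR (S k)) by (rewrite S_INR; pose proof (pos_INR k); lra).
  set (z := fun t => if Rlt_dec 0 t then f t * / t ^ (S k) - INR (S k) * If k Rb f t else 0).
  assert (zpos : forall t, 0 < t -> z t = f t * / t ^ (S k) - INR (S k) * If k Rb f t).
  { intros t Ht. unfold z. destruct (Rlt_dec 0 t); [auto|lra]. }
  assert (Hg : cpos (fun s => f s * / s ^ (S (S k)))) by (apply cpos_mult; auto; apply cpos_invpow).
  assert (dI : forall x, 0 < x -> is_derive (If k Rb f) x (- (f x * / x ^ (S (S k))))).
  { intros x Hx. unfold If. apply (derR (fun s => f s * / s ^ (S (S k)))); auto. }
  assert (cI : cpos (If k Rb f)).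
  { apply cpos_der. intros s Hs. eexists. apply dI; auto. }
  assert (cz : cpos z).
  { apply (cpos_ext (fun t => f t * / t ^ (S k) + (- INR (S k)) * If k Rb f t)).
    intros; rewrite zpos; auto; ring.
    apply cpos_plus. apply cpos_mult; auto. apply cpos_invpow.
    apply cpos_mult. apply cpos_const. auto. }
  assert (Izero : forall t, Rb < t -> If k Rb f t = 0).
  { intros t Ht. unfold If. apply RInt_zero_on. intros x Hx.
    rewrite Rmin_right, Rmax_left in Hx by lra. rewrite HfR by lra. ring. }
  assert (DI : forall t, 0 < t -> Dint (S k) Rb z t = t ^ (S k) * If k Rb f t).
  { intros t Ht. rewrite Dint_eq.
    set (F := fun s => - (s ^ (S k) * If k Rb f s)).
    assert (HI : is_RInt (fun r => z r * r ^ k) t Rb (minus (F Rb) (F t))).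
    { apply (is_RInt_derive (V:=R_CompleteNormedModule) F).
      - intros x Hx. assert (0 < x) by (pose proof (Rmin_pos' t Rb Ht HR); lra).
        unfold F. eapply is_derive_eq.
        apply (is_derive_opp (K:=R_AbsRing) (V:=R_NormedModule) (fun s => s ^ (S k) * If k Rb f s)).
        apply (is_derive_mult (K:=R_AbsRing)). apply der_pow. apply dI; auto.
        intros; apply Rmult_comm.
        rewrite zpos by auto. unfold opp, plus, mult; simpl. field.
        split; [apply pow_nonzero|]; lra.
      - intros x Hx. assert (0 < x) by (pose proof (Rmin_pos' t Rb Ht HR); lra).
        apply cpos_mult; auto. apply cpos_pow. }
    rewrite (is_RInt_unique _ _ _ _ HI). unfold F, minus, plus, opp; simpl.
    unfold If at 1. rewrite (RInt_point (V:=R_CompleteNormedModule)). change (@zero R_CompleteNormedModule) with 0. ring. }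
  assert (Rpos_eq : forall t, 0 < t -> Rpos (S k) Rb z t = f t).
  { intros t Ht. unfold Rpos. rewrite zpos, DI by auto. field. apply pow_nonzero; lra. }
  assert (Dz : inD (S k) Rb z).
  { split; [auto|]. split. intros t Ht. unfold z. destruct (Rlt_dec 0 t); [lra|auto].
    split. intros t Ht. rewrite zpos, Izero, HfR by lra. ring.
    split. apply lim0_iff.
    apply (lim0_ext (fun t => f t + - INR (S k) * (t ^ (S k) * If k Rb f t))).
    intros t Ht. rewrite zpos by auto. field. apply pow_nonzero; lra.
    apply (lim0_eq _ (f 0 + - INR (S k) * (f 0 / INR (S k)))). apply lim0_plus. exact Hf0. apply lim0_scal. apply lim_tI; auto. field. lra.
    exists (f 0 / INR (S k)). apply lim0_iff.
    apply (lim0_ext (fun t => t ^ (S k) * If k Rb f t)). intros; rewrite DI; auto.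
    apply lim_tI; auto. }
  exists z. split; auto.
  apply functional_extensionality. intros t.
  destruct (Rtotal_order t 0) as [Hn|[He|Hp]].
  - rewrite Rmap_neg, Hfn by auto. auto.
  - subst t. apply Rmap_0. apply (lim0_ext f). intros; rewrite Rpos_eq; auto. auto.
  - rewrite Rmap_pos by auto. auto.
Qed.

Theorem lemma3p5 (a : nat) (Rb : R) (Ha : (1 <= a)%nat) (HR : 0 < Rb) :
  (* R^a(zeta) extends continuously and lands in C_{c,R}([0,oo)) *)
  (forall z, inD a Rb z -> inC Rb (Rmap a Rb z)) /\
  (* linearity *)
  (forall z1 z2 (c : R), inD a Rb z1 -> inD a Rb z2 ->
     Rmap a Rb (fun s => z1 s + c * z2 s) =
     (fun t => Rmap a Rb z1 t + c * Rmap a Rb z2 t)) /\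
  (* injectivity *)
  (forall z1 z2, inD a Rb z1 -> inD a Rb z2 ->
     Rmap a Rb z1 = Rmap a Rb z2 -> z1 = z2) /\
  (* surjectivity *)
  (forall f, inC Rb f -> exists z, inD a Rb z /\ Rmap a Rb z = f) /\
  (* continuity of R^a *)
  (forall z0, inD a Rb z0 -> forall eps, 0 < eps -> exists delta, 0 < delta /\
     forall z, inD a Rb z -> normD a Rb (fun s => z s - z0 s) < delta ->
       normC (fun t => Rmap a Rb z t - Rmap a Rb z0 t) < eps) /\
  (* continuity of the inverse *)
  (forall z0, inD a Rb z0 -> forall eps, 0 < eps -> exists delta, 0 < delta /\
     forall z, inD a Rb z ->
       normC (fun t => Rmap a Rb z t - Rmap a Rb z0 t) < delta ->
       normD a Rb (fun s => z s - z0 s) < eps).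
Proof.
  destruct a as [|k]; [lia|].
  assert (HS : 1 <= INR (S k)) by (rewrite S_INR; pose proof (pos_INR k); lra).
  split. intros z D; apply Rmap_inC; auto.
  split. intros; apply Rmap_lin; auto.
  split. intros; eapply Rmap_inj; eauto.
  split. intros; apply surj; auto.
  split.
  - intros z0 D0 eps He. exists (eps / (INR (S k) + 2)). split.
    apply Rdiv_lt_0_compat; lra.
    intros z D Hn. rewrite Rmap_sub by auto.
    eapply Rle_lt_trans; [apply cont_fwd; auto; apply inD_sub; auto|].
    apply Rlt_le_trans with ((INR (S k) + 1) * (eps / (INR (S k) + 2))).
    apply Rmult_lt_compat_l; lra.
    apply Rmult_le_reg_r with (INR (S k) + 2). lra.
    replace ((INR (S k) + 1) * (eps / (INR (S k) + 2)) * (INR (S k) + 2)) with ((INR (S k) + 1) * eps) by (field; lra).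
    nra.
  - intros z0 D0 eps He. exists (eps / 4). split. lra.
    intros z D Hn. rewrite Rmap_sub in Hn by auto.
    eapply Rle_lt_trans; [apply cont_bwd; auto; apply inD_sub; auto|]. lra.
Qed.
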